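(* For every integer $n\ge1$, $\operatorname{num}_{\mathcal T}(n,-1)=3^{v_3(n!)}$. In particular, for every $n\ge1$, $$\operatorname{num}_{\mathcal T}(3n,-1)=\operatorname{num}_{\mathcal T}(3n+1,-1)=\operatorname{num}_{\mathcal T}(3n+2,-1)=3^{v_3((3n)!)}.$$
   Context: $v_3(M)$ is the exponent of $3$ in the positive integer $M$. A ternary partition of $n$ is a partition of $n$ (finite nonincreasing sequence of positive integers summing to $n$) all of whose parts are powers of $3$ (including $1$); $\mathcal T(n)$ is the set of ternary partitions of $n$, and $m_\lambda(i)$ the number of parts of $\lambda$ equal to $i$. For $\lambda\in\mathcal T(n)$ let $h_{\mathcal T,\lambda}(x)=\prod_{k\ge0}(1+x^{3^k})^{\lfloor n/3^k\rfloor-m_\lambda(3^k)}$. Let $G_{\mathcal T}(n,x)=\gcd\{h_{\mathcal T,\lambda}(x):\lambda\in\mathcal T(n)\}$ in $\mathbb{Z}[x]$ (normalized with positive leading coefficient), and $\operatorname{num}_{\mathcal T}(n,x)=\frac{1}{G_{\mathcal T}(n,x)}\sum_{\lambda\in\mathcal T(n)}h_{\mathcal T,\lambda}(x)\in\mathbb{Z}[x]$. *)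

(* Defs.v *)
From mathcomp Require Import all_boot all_order all_algebra.
Set Implicit Arguments. Unset Strict Implicit. Unset Printing Implicit Defensive.
Import GRing.Theory Num.Theory.
Local Open Scope ring_scope.

(* p is a power of 3 (p = 3^k for some k; such k satisfies k <= p). *)
Definition pow3 (p : nat) : bool := [exists k : 'I_p.+1, p == (3 ^ k)%N].

(* A partition of n has at most n parts, each at most n.  We represent a
   partition of n as an n-tuple with entries in {0..n}: its parts listed in
   nonincreasing order, padded at the end with zeros. *)
Definition is_ternary (n : nat) (t : n.-tuple 'I_n.+1) : bool :=
  [&& sorted geq (map val t),
      sumn (map val t) == n
    & all (fun p => (p == 0%N) || pow3 p) (map val t)].

Definition mult (n : nat) (t : n.-tuple 'I_n.+1) (i : nat) : nat :=
  count_mem i (map val t).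

(* h_{T,lambda}(x) = prod_{k>=0} (1 + x^{3^k})^(floor(n/3^k) - m_lambda(3^k)).
   Factors with k > n are 1 (3^k > n), so the product is truncated to k <= n. *)
Definition hT (n : nat) (t : n.-tuple 'I_n.+1) : {poly int} :=
  \prod_(k < n.+1) (1 + 'X^((3 ^ k)%N)) ^+ (n %/ 3 ^ k - mult t (3 ^ k))%N.

Definition dvdZ (d p : {poly int}) : Prop := exists q : {poly int}, p = d * q.

Definition is_gcdT (n : nat) (g : {poly int}) : Prop :=
  [/\ (forall t : n.-tuple 'I_n.+1, is_ternary t -> dvdZ g (hT t)),
      (forall d : {poly int},
          (forall t : n.-tuple 'I_n.+1, is_ternary t -> dvdZ d (hT t)) ->
          dvdZ d g)
    & 0 < lead_coef g].

Definition sumT (n : nat) : {poly int} :=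
  \sum_(t : n.-tuple 'I_n.+1 | is_ternary t) hT t.

Definition numT (n : nat) (q : {poly int}) : Prop :=
  exists g : {poly int}, is_gcdT n g /\ sumT n = g * q.

(* Main.v *)
Require Import Defs.
Set Warnings "-notation-overridden,-ambiguous-paths,-notation-incompatible-prefix".
From mathcomp Require Import all_boot all_order all_algebra.
From mathcomp Require Import zify ring.
Import GRing.Theory Num.Theory.
Local Open Scope ring_scope.

Definition Qf (j : nat) : {poly int} :=
  if j is j'.+1 then 1 - 'X^(3^j') + ('X^(3^j'))^+2 else 1 + 'X.
Definition Pf (k : nat) : {poly int} := 1 + 'X^(3^k).

Lemma P_prod k : Pf k = \prod_(0 <= j < k.+1) Qf j.
Proof.
elim: k => [|k IH]; first by rewrite big_nat1 /Pf /Qf expn0 expr1.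
rewrite big_nat_recr //= -IH /Pf /Qf expnS mulnC exprM.
set y := 'X^(3^k). rewrite -[y^+3]/(y^+3). ring.
Qed.

Definition Qmon (L : nat) (a : nat -> nat) : {poly int} :=
  \prod_(0 <= j < L) Qf j ^+ a j.

Lemma conv L (e : nat -> nat) :
  \prod_(0 <= k < L) Pf k ^+ e k = Qmon L (fun j => (\sum_(j <= k < L) e k)%N).
Proof.
elim: L => [|L IH]; first by rewrite /Qmon !big_geq.
rewrite big_nat_recr //= IH P_prod -prodrXl /Qmon [in RHS]big_nat_recr //=.
rewrite big_nat1 [X in _ * X]big_nat_recr //= mulrA; congr (_ * _).
rewrite -big_split /=; apply: eq_big_nat => j /andP[_ jL].
by rewrite -exprD big_nat_recr //= ltnW.
Qed.
Lemma dvdZ_refl p : dvdZ p p.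
Proof. by exists 1; rewrite mulr1. Qed.
Lemma dvdZ_trans a b c : dvdZ a b -> dvdZ b c -> dvdZ a c.
Proof. by move=> [x ->] [y ->]; exists (x * y); rewrite mulrA. Qed.
Lemma dvdZ_mulr a b r : dvdZ a b -> dvdZ a (b * r).
Proof. by move=> [x ->]; exists (x * r); rewrite mulrA. Qed.
Lemma dvdZ_mull a b r : dvdZ a b -> dvdZ a (r * b).
Proof. by move=> [x ->]; exists (x * r); rewrite mulrC mulrA. Qed.
Lemma dvdZ_add a b c : dvdZ a b -> dvdZ a c -> dvdZ a (b + c).
Proof. by move=> [x ->] [y ->]; exists (x + y); rewrite mulrDr. Qed.
Lemma dvdZ_mul2 a b c e : dvdZ a b -> dvdZ c e -> dvdZ (a * c) (b * e).
Proof. by move=> [x ->] [y ->]; exists (x * y); ring. Qed.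

Lemma lead_unit (d p : {poly int}) : dvdZ d p -> p \is monic -> lead_coef d \is a GRing.unit.
Proof.
move=> [q ->] /monicP; rewrite lead_coefM => h.
by apply/unitrPr; exists (lead_coef q).
Qed.

Lemma cancel3 (d X : {poly int}) : lead_coef d \is a GRing.unit ->
  dvdZ d (3%:P * X) -> dvdZ d X.
Proof.
move=> ud [t ht].
have dn0 : d != 0 by apply: contraTneq ud => ->; rewrite lead_coef0 unitr0.
have hX := Pdiv.IdomainUnit.divp_eq ud X.
set q := X %/ d in hX; set r := X %% d in hX.
have sr : (size r < size d)%N by rewrite ltn_modp.
have e : 3%:P * r = d * (t - 3%:P * q).
  by rewrite mulrBr -ht hX; ring.
have r0 : r = 0.
  have [s0|sn0] := eqVneq (t - 3%:P * q) 0.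
    by move: e; rewrite s0 mulr0 => /eqP; rewrite mulf_eq0 polyC_eq0 /= => /eqP.
  have [->//|rn0] := eqVneq r 0.
  move: sr; rewrite -(size_scale r (_ : (3:int) != 0)) // -mul_polyC e size_mul //.
  by rewrite (polySpred sn0) addnS /= ltnNge leq_addr.
by exists q; rewrite hX r0 addr0 mulrC.
Qed.

Lemma copr1 (d A R P u v : {poly int}) M : lead_coef d \is a GRing.unit ->
  u * R + v * P = 3%:P -> dvdZ d (A * R) -> dvdZ d (A * P ^+ M) -> dvdZ d A.
Proof.
move=> ud uv; elim: M A => [|M IH] A hR hP; first by move: hP; rewrite expr0 mulr1.
apply: IH => //. apply: (@cancel3 d (A * P ^+ M) ud).
have -> : 3%:P * (A * P ^+ M) = u * ((A * R) * P ^+ M) + v * (A * P ^+ M.+1).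
  by rewrite -uv exprS; ring.
by apply: dvdZ_add; apply: dvdZ_mull => //; apply: dvdZ_mulr.
Qed.

Lemma copr (d A R P u v : {poly int}) N M : lead_coef d \is a GRing.unit ->
  u * R + v * P = 3%:P -> dvdZ d (A * R ^+ N) -> dvdZ d (A * P ^+ M) -> dvdZ d A.
Proof.
move=> ud uv; elim: N A => [|N IH] A hR hP; first by move: hR; rewrite expr0 mulr1.
apply: IH => //; apply: (copr1 _ _ _ _ _ _ M ud uv).
  by rewrite -mulrA -exprSr.
by rewrite mulrAC; apply: dvdZ_mulr.
Qed.

Lemma Pf_monic k : Pf k \is monic.
Proof. by rewrite /Pf addrC -[1]/(1%:P) monicXnaddC // expn_gt0. Qed.

Lemma Qf_monic j : Qf j \is monic.
Proof.
case: j => [|j]; first by rewrite /Qf addrC -[1]/(1%:P) monicXaddC.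
have e : Pf j.+1 = Pf j * Qf j.+1.
  by rewrite !P_prod [in LHS]big_nat_recr.
by have := Pf_monic j.+1; rewrite e monicMl // Pf_monic.
Qed.

Lemma Qmon_monic L a : Qmon L a \is monic.
Proof. by apply: monic_prod => j _; apply: monic_exp; apply: Qf_monic. Qed.

Lemma Qmon_split L a b :
  Qmon L (fun j => a j + b j)%N = Qmon L a * Qmon L b.
Proof. by rewrite /Qmon -big_split /=; apply: eq_bigr => j _; rewrite exprD. Qed.

Lemma Qmon_ext L a b : (forall j, (j < L)%N -> a j = b j) -> Qmon L a = Qmon L b.
Proof. by move=> h; apply: eq_big_nat => j /andP[_ /h ->]. Qed.

Lemma Qmon_dvd L a b : (forall j, (j < L)%N -> a j <= b j)%N ->
  dvdZ (Qmon L a) (Qmon L b).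
Proof.
move=> h; exists (Qmon L (fun j => b j - a j)%N); rewrite -Qmon_split.
by apply: Qmon_ext => j /h /subnKC.
Qed.

Lemma Qmon_delta L a i N : (i < L)%N ->
  Qmon L (fun j => a j + (if j == i then N else 0))%N = Qmon L a * Qf i ^+ N.
Proof.
move=> iL; rewrite Qmon_split; congr (_ * _).
rewrite /Qmon (big_cat_nat (leq0n i) (ltnW iL)) (big_ltn iL) eqxx.
rewrite big1_seq; last first.
  move=> j; rewrite mem_index_iota => /andP[_ ji]; by rewrite (ltn_eqF ji).
rewrite /= mul1r big1_seq; last first.
  move=> j /andP[_]; rewrite mem_index_iota => /andP[ij _]; by rewrite (gtn_eqF ij).
by rewrite /= mulr1.
Qed.

Lemma Qmon_low L m M : (m < L)%N ->
  Qmon L (fun j => if (j <= m)%N then M else 0%N) = Pf m ^+ M.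
Proof.
move=> mL; rewrite P_prod -prodrXl /Qmon (big_cat_nat (n := m.+1)) //=.
rewrite [X in _ * X]big1_seq ?mulr1.
  by apply: eq_big_nat => j /andP[_]; rewrite ltnS => ->.
move=> j; rewrite ?andTb mem_index_iota => /andP[mj _]; by rewrite leqNgt mj.
Qed.
Lemma cnt_le (x : nat) (s : seq nat) : (count_mem x s * x <= sumn s)%N.
Proof.
elim: s => [|y s IH] //=; rewrite mulnDl leq_add //.
by case: eqP => [->|]; rewrite ?mul1n ?mul0n.
Qed.

Lemma single (x L : nat) : (\sum_(0 <= k < L) 3^k * (x == 3^k) <= x)%N.
Proof.
rewrite big_mkord.
case: (boolP [exists k : 'I_L, x == (3^k)%N]) => [/existsP[k /eqP xk]|].
  rewrite (bigD1 k) //= big1 ?addn0 ?xk ?eqxx ?muln1 //.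
  move=> i ik; rewrite eqn_exp2l // eq_sym.
  by move: ik; rewrite -val_eqE /= => /negbTE ->; rewrite muln0.
move/existsPn => h; rewrite big1 // => i _.
by rewrite (negbTE (h i)) muln0.
Qed.

Lemma pow_count_le (s : seq nat) L :
  (\sum_(0 <= k < L) 3^k * count_mem (3^k) s <= sumn s)%N.
Proof.
elim: s => [|x s IH]; first by rewrite big1 // => k _; rewrite muln0.
rewrite /=.
under eq_bigr => k _ do rewrite mulnDr.
by rewrite big_split /= leq_add // single.
Qed.
Set Implicit Arguments.

Definition Nn (n k : nat) : nat := (n %/ 3^k)%N.
Definition Tn (n j : nat) : nat := (\sum_(j <= k < n.+1) Nn n k)%N.
Definition gT (n : nat) : {poly int} := Qmon n.+1 (fun j => Tn n j.+1).
Definition mu {n} (t : n.-tuple 'I_n.+1) (k : nat) : nat := mult t (3^k)%N.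
Definition Et {n} (t : n.-tuple 'I_n.+1) (j : nat) : nat :=
  (\sum_(j <= k < n.+1) (Nn n k - mu t k))%N.

Lemma hT_Q n (t : n.-tuple 'I_n.+1) : hT t = Qmon n.+1 (Et t).
Proof.
by rewrite /hT -(big_mkord xpredT (fun k => Pf k ^+ (n %/ 3 ^ k - mult t (3 ^ k))%N)) conv.
Qed.

Lemma Tn_rec n j : (j < n.+1)%N -> Tn n j = (Nn n j + Tn n j.+1)%N.
Proof. by move=> h; rewrite /Tn big_ltn. Qed.

Lemma Tn_big n j : (n.+1 <= j)%N -> Tn n j = 0%N.
Proof. by move=> h; rewrite /Tn big_geq. Qed.

Lemma Tn_mono n i j : (i <= j)%N -> (Tn n j <= Tn n i)%N.
Proof.
move/subnK <-; elim: (j - i)%N => [|k IH] //.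
apply: leq_trans IH; rewrite addSn.
case: (ltnP (k + i) n.+1) => h; first by rewrite (@Tn_rec n (k + i)) // leq_addl.
by rewrite (@Tn_big n (k + i).+1) // (leq_trans h).
Qed.

Lemma mu_le n (t : n.-tuple 'I_n.+1) k : sumn (map val t) = n -> (mu t k <= Nn n k)%N.
Proof.
move=> hs; rewrite /Nn leq_divRL ?expn_gt0 //.
by have := cnt_le (3^k) (map val t); rewrite hs.
Qed.

Lemma leq_sum_nat m n (F1 F2 : nat -> nat) :
  (forall k, (m <= k < n)%N -> (F1 k <= F2 k)%N) ->
  (\sum_(m <= k < n) F1 k <= \sum_(m <= k < n) F2 k)%N.
Proof.
move=> H; rewrite big_nat_cond [X in (_ <= X)%N]big_nat_cond.
by apply: leq_sum => k /andP[h _]; apply: H.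
Qed.

Definition Mn {n} (t : n.-tuple 'I_n.+1) j := (\sum_(j <= k < n.+1) mu t k)%N.

Lemma Et_M n (t : n.-tuple 'I_n.+1) j : sumn (map val t) = n ->
  (Et t j + Mn t j)%N = Tn n j.
Proof.
move=> hs; rewrite /Et /Mn /Tn sumnB; last by move=> k _; apply: mu_le.
by rewrite subnK // leq_sum // => k _; apply: mu_le.
Qed.

Lemma weighted n (t : n.-tuple 'I_n.+1) : sumn (map val t) = n ->
  (\sum_(0 <= k < n.+1) 3^k * mu t k <= n)%N.
Proof. by move=> hs; have := pow_count_le (map val t) n.+1; rewrite hs. Qed.

Lemma M_bound n (t : n.-tuple 'I_n.+1) j : sumn (map val t) = n ->
  (Mn t j <= Nn n j)%N.
Proof.
move=> hs; rewrite /Nn leq_divRL ?expn_gt0 //.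
case: (ltnP n.+1 j) => hj; first by rewrite /Mn big_geq // ltnW.
apply: leq_trans (@weighted n t hs).
rewrite (big_cat_nat (leq0n j) hj) /= mulnC big_distrr /=.
apply: leq_trans (leq_addl _ _) ; apply: leq_sum_nat => k /andP[jk _].
by rewrite leq_mul2r leq_pexp2l // orbT.
Qed.

Lemma Et_ge n (t : n.-tuple 'I_n.+1) j : sumn (map val t) = n -> (j < n.+1)%N ->
  (Tn n j.+1 <= Et t j)%N.
Proof.
move=> hs hj; have := @Et_M n t j hs; rewrite Tn_rec // => e.
have := @M_bound n t j hs; lia.
Qed.

Definition base (n m : nat) : seq nat :=
  nseq (Nn n m) (3^m)%N ++ nseq (n - 3^m * Nn n m)%N 1%N ++
  nseq (n - Nn n m - (n - 3^m * Nn n m))%N 0%N.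
Definition lamseq n m := sort geq (base n m).

Lemma lamseq_perm n m : perm_eq (lamseq n m) (base n m).
Proof. by rewrite /lamseq perm_sort. Qed.

Lemma NnP n m : (3^m * Nn n m <= n)%N /\ (Nn n m <= 3^m * Nn n m)%N.
Proof.
split; first by rewrite mulnC /Nn leq_divM.
by rewrite leq_pmull // expn_gt0.
Qed.

Lemma size_lamseq n m : size (lamseq n m) = n.
Proof.
rewrite size_sort /base !size_cat !size_nseq.
have [h1 h2] := NnP n m; move: h1 h2; set P := (3^m * Nn n m)%N; lia.
Qed.

Lemma lam_proof n m : size (map (@inord n) (lamseq n m)) == n.
Proof. by rewrite size_map size_lamseq. Qed.

Definition lam n m : n.-tuple 'I_n.+1 := Tuple (lam_proof n m).

Lemma base_small n m : all (fun x => x < n.+1)%N (base n m).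
Proof.
rewrite /base !all_cat !all_nseq /=.
have [h1 h2] := NnP n m.
rewrite ltnS orbT andbT; apply/andP; split.
  case N0: (Nn n m == 0%N) => //=.
  by rewrite (leq_trans _ h1) // leq_pmulr // lt0n N0.
case N1: (n - 3 ^ m * Nn n m == 0)%N => //=.
by move/negbT: N1; rewrite -lt0n ltnS => h; apply: leq_trans h (leq_subr _ _).
Qed.

Lemma val_lam n m : map val (lam n m) = lamseq n m.
Proof.
rewrite /= -map_comp; apply: map_id_in => x.
rewrite (perm_mem (lamseq_perm n m)) => xin /=.
by rewrite inordK //; move/allP: (base_small n m); apply.
Qed.

Lemma mu_lam n m k : mu (lam n m) k =
  ((3^m == 3^k) * Nn n m + (1 == 3^k) * (n - 3^m * Nn n m))%N.
Proof.
rewrite /mu /mult val_lam (permP (lamseq_perm n m)) /base !count_cat !count_nseq /=.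
by rewrite [(0 == _)]eq_sym eqn0Ngt expn_gt0 /= mul0n addn0.
Qed.

Lemma lam_ternary n m : is_ternary (lam n m).
Proof.
rewrite /is_ternary val_lam; apply/and3P; split.
- by apply: sort_sorted => x y; apply: leq_total.
- rewrite (perm_sumn (lamseq_perm n m)) /base !sumn_cat !sumn_nseq.
  have [h1 h2] := NnP n m; by rewrite mul0n addn0 mul1n subnKC.
- rewrite (eq_all_r (perm_mem (lamseq_perm n m))) /base !all_cat !all_nseq /=.
  have p1 : pow3 1 by apply/existsP; exists ord0.
  have pm : pow3 (3^m).
    apply/existsP.
    by exists (Ordinal (ltnW (ltn_expl m (isT : (1 < 3)%N)) : (m < (3^m).+1)%N)).
  by rewrite pm p1 !orbT.
Qed.

Lemma sub_lam n m k : (m <= k)%N ->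
  (Nn n k - mu (lam n m) k)%N = if k == m then 0%N else Nn n k.
Proof.
move=> mk; rewrite mu_lam eqn_exp2l //.
case: eqP => [<-|/eqP km]; last first.
  have h1k : (1 == 3 ^ k)%N = false.
    rewrite -[1%N](expn0 3) eqn_exp2l //; apply/negbTE; move: km mk.
    by case: k => //; rewrite leqn0 => /negbTE ->.
  by rewrite mul0n add0n h1k mul0n subn0 eq_sym (negbTE km).
by rewrite eqxx mul1n subnDA subnn sub0n.
Qed.

Lemma Et_lam n m j : (m <= j)%N -> (j < n.+1)%N ->
  Et (lam n m) j = if j == m then Tn n j.+1 else Tn n j.
Proof.
move=> mj jn; rewrite /Et; case: (eqVneq j m) => [ejm|jm].
  subst j; rewrite (big_ltn jn) sub_lam // eqxx add0n.
  apply: eq_big_nat => k /andP[mk _].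
  by rewrite sub_lam ?(ltnW mk) // gtn_eqF.
apply: eq_big_nat => k /andP[jk _].
rewrite sub_lam ?(leq_trans mj jk) //.
by have -> : (k == m) = false by apply/negbTE; move: jm mj jk; lia.
Qed.

Lemma three : (3%:P : {poly int}) = 3.
Proof. by rewrite -polyC_natr. Qed.

Lemma bezout m : 1 * Qf m.+1 + (2 - 'X^(3^m)) * Pf m = 3%:P.
Proof. rewrite three /Qf /Pf; ring. Qed.

Lemma Et_le n (t : n.-tuple 'I_n.+1) j : (Et t j <= Tn n j)%N.
Proof. by apply: leq_sum => k _; apply: leq_subr. Qed.

Lemma univ n (d : {poly int}) :
  (forall t : n.-tuple 'I_n.+1, is_ternary t -> dvdZ d (hT t)) -> dvdZ d (gT n).
Proof.
move=> H.
have ud : lead_coef d \is a GRing.unit.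
  apply: (lead_unit _ _ (H _ (lam_ternary n 0))); rewrite hT_Q; apply: Qmon_monic.
pose c m j := if (j <= m)%N then Tn n j.+1 else Tn n j.
have step : forall m, (m < n.+1)%N -> dvdZ d (Qmon n.+1 (c m)).
  elim=> [|m IH] hm.
    have := H _ (lam_ternary n 0); rewrite hT_Q.
    by rewrite (@Qmon_ext _ _ (c 0%N)) // => j jn; rewrite Et_lam // /c leqn0.
  have IH' := IH (ltnW hm).
  have e1 : Qmon n.+1 (c m) = Qmon n.+1 (c m.+1) * Qf m.+1 ^+ Nn n m.+1.
    rewrite -Qmon_delta //; apply: Qmon_ext => j jn; rewrite /c.
    case: (ltngtP j m.+1) => [jm|mj|->].
    - have jm' : (j <= m)%N by rewrite -ltnS.
      by rewrite jm' addn0.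
    - by rewrite leqNgt (ltnW mj) addn0.
    - by rewrite ltnn (@Tn_rec n m.+1) // addnC.
  have h2 := H _ (lam_ternary n m.+1); rewrite hT_Q in h2.
  set B := Tn n 0.
  have h3 : dvdZ d (Qmon n.+1 (c m.+1) * Pf m ^+ B).
    apply: (dvdZ_trans _ _ _ h2).
    rewrite -(Qmon_low n.+1 m B (ltnW hm)) -Qmon_split; apply: Qmon_dvd => j jn.
    case: (leqP j m) => jm.
      apply: leq_trans _ (leq_addl _ _).
      exact: leq_trans (Et_le (lam n m.+1) j) (@Tn_mono n 0 j (leq0n j)).
    rewrite addn0 Et_lam // /c.
    by case: (ltngtP j m.+1) => [|//|->//]; rewrite ltnNge jm.
  apply: (copr d (Qmon n.+1 (c m.+1)) (Qf m.+1) (Pf m) 1 (2 - 'X^(3^m)) (Nn n m.+1) B ud).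
  - exact: bezout.
  - by rewrite -e1.
  - exact: h3.
have := step n (ltnSn n); rewrite /gT (@Qmon_ext _ (c n) (fun j => Tn n j.+1)) // => j jn.
by rewrite /c -ltnS jn.
Qed.

Lemma gT_monic n : gT n \is monic.
Proof. exact: Qmon_monic. Qed.

Lemma gT_dvd n (t : n.-tuple 'I_n.+1) : is_ternary t -> dvdZ (gT n) (hT t).
Proof.
move/and3P=> [_ /eqP hs _]; rewrite hT_Q; apply: Qmon_dvd => j jn.
exact: Et_ge.
Qed.

Definition q0 n : {poly int} :=
  \sum_(t : n.-tuple 'I_n.+1 | is_ternary t) Qmon n.+1 (fun j => Et t j - Tn n j.+1)%N.

Lemma sumT_q0 n : sumT n = gT n * q0 n.
Proof.
rewrite /sumT /q0 mulr_sumr; apply: eq_bigr => t ht.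
move/and3P: ht => [_ /eqP hs _].
rewrite hT_Q /gT -Qmon_split; apply: Qmon_ext => j jn; rewrite subnKC //.
exact: Et_ge.
Qed.

Lemma Qf_m1 j : (Qf j).[-1] = if j is _.+1 then 3 else 0.
Proof.
case: j => [|j]; first by rewrite /Qf !hornerE addrN.
rewrite /Qf !hornerE -signr_odd oddX orbT expr1.
by rewrite expr2 mulrNN mulr1 opprK.
Qed.

Lemma ones n (t : n.-tuple 'I_n.+1) : mu t 0 = n -> map val t = nseq n 1%N.
Proof.
move=> h; have sz : size (map val t) = n by rewrite size_map size_tuple.
have : all (pred1 1%N) (map val t) by rewrite all_count sz; apply/eqP; exact: h.
by move/all_pred1P; rewrite sz.
Qed.

Lemma full n (t : n.-tuple 'I_n.+1) : sumn (map val t) = n -> Mn t 0 = n ->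
  t = lam n 0.
Proof.
move=> hs hM.
have W := @weighted n t hs.
rewrite big_ltn // expn0 mul1n in W.
have hM' := hM; rewrite /Mn big_ltn // in hM'.
have L3 : (3 * Mn t 1 <= \sum_(1 <= k < n.+1) 3 ^ k * mu t k)%N.
  rewrite /Mn big_distrr /=; apply: leq_sum_nat => k /andP[k1 _].
  by rewrite leq_mul2r (leq_pexp2l (isT : (0 < 3)%N) k1) orbT.
have e0 : mu t 0 = n by rewrite /Mn in L3; lia.
apply: val_inj; apply: (inj_map val_inj).
rewrite ones // ones // mu_lam /Nn expn0 divn1 mul1n eqxx mul1n subnn addn0 //.
Qed.

Lemma q0_m1 n : (q0 n).[-1] = (3 ^ logn 3 n`!)%N%:Z.
Proof.
rewrite /q0 horner_sum (bigD1 (lam n 0)) ?lam_ternary //= big1 ?addr0.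
  rewrite /Qmon horner_prod big_ltn // Et_lam // eqxx subnn expr0.
  rewrite (_ : (1 : {poly int}).[-1] = 1) ?mul1r; last exact: hornerC.
  rewrite (eq_big_nat _ _ (F2 := fun j => 3 ^+ Nn n j)); last first.
    move=> j /andP[j1 jn]; rewrite horner_exp Qf_m1 Et_lam // ?(ltnW j1) //.
    case: j j1 jn => [//|j] _ jn; rewrite (@Tn_rec n j.+1) // addnK //.
  by rewrite prodrXr logn_fact // -natz natrX natz.
move=> t /andP[ht tl]; rewrite /Qmon horner_prod big_ltn // horner_exp Qf_m1.
move/and3P: ht => [_ /eqP hs _].
have := @Et_M n t 0 hs; rewrite (@Tn_rec n 0) // /Nn expn0 divn1 => e.
have hb := @M_bound n t 0 hs; rewrite /Nn expn0 divn1 in hb.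
have hlt : (Mn t 0 < n)%N.
  rewrite ltn_neqAle hb andbT; apply/eqP => hM.
  by move: tl; rewrite (@full n t hs hM) eqxx.
by rewrite expr0n (_ : (Et t 0 - Tn n 1 == 0)%N = false) ?mul0r //; lia.
Qed.

Lemma gcd_unique n g' : is_gcdT n g' -> g' = gT n.
Proof.
case=> H1 H2 H3.
have gn0 : gT n != 0 := monic_neq0 (gT_monic n).
have [a ea] : dvdZ (gT n) g' by apply: H2 => t ht; apply: (@gT_dvd n t ht).
have [b eb] : dvdZ g' (gT n) by apply: (@univ n g' H1).
have ab : a * b = 1.
  by apply: (mulfI gn0); rewrite mulrA -ea -eb mulr1.
have an0 : a != 0.
  by apply/eqP => a0; move: ab; rewrite a0 mul0r => /eqP; rewrite eq_sym oner_eq0.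
have bn0 : b != 0.
  by apply/eqP => b0; move: ab; rewrite b0 mulr0 => /eqP; rewrite eq_sym oner_eq0.
have sz : size (a * b) = size (1 : {poly int}) by rewrite ab.
rewrite size_mul // size_poly1 in sz.
have sa : (0 < size a)%N by rewrite size_poly_gt0.
have sb : (0 < size b)%N by rewrite size_poly_gt0.
have sa1 : (size a <= 1)%N.
  move: sz sa sb; set x := size a; set y := size b; rewrite -subn1 => sz sa sb. lia.
have ea0 := size1_polyC sa1.
have la : lead_coef (a * b) = lead_coef (1 : {poly int}) by rewrite ab.
rewrite lead_coefM lead_coef1 in la.
move: H3; rewrite ea lead_coefM (monicP (gT_monic n)) mul1r => H3.
have a1 : lead_coef a = 1.
  move: H3 la; set x := lead_coef a; set y := lead_coef b => h1.
  rewrite mulrC => /intUnitRing.unitzPl; rewrite qualifE => /orP[/eqP //|/eqP xm].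
  by move: h1; rewrite xm.
have sa' : size a = 1%N by apply/eqP; rewrite eqn_leq sa1 sa.
have a0 : a`_0 = 1 by rewrite -a1 lead_coefE sa'.
by rewrite ea0 a0 mulr1.
Qed.

Lemma numT_val n q : numT n q -> q = q0 n.
Proof.
case=> g' [hg e]; rewrite (gcd_unique hg) sumT_q0 in e.
by apply: (mulfI (monic_neq0 (gT_monic n))); rewrite -e.
Qed.

Lemma logn_step m : ~~ (3 %| m.+1)%N -> logn 3 (m.+1)`! = logn 3 m`!.
Proof.
move=> h; rewrite factS lognM ?fact_gt0 // logn_coprime ?add0n //.
by rewrite prime_coprime.
Qed.

Theorem theorem4 :
  (forall n : nat, (1 <= n)%N ->
     (exists q : {poly int}, numT n q) /\
     (forall q : {poly int}, numT n q ->
        q.[-1] = ((3 ^ logn 3 n`!)%N)%:Z)) /\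
  (forall n : nat, (1 <= n)%N ->
     forall q0 q1 q2 : {poly int},
       numT (3 * n) q0 -> numT (3 * n + 1) q1 -> numT (3 * n + 2) q2 ->
       [/\ q0.[-1] = ((3 ^ logn 3 (3 * n)`!)%N)%:Z,
           q1.[-1] = ((3 ^ logn 3 (3 * n)`!)%N)%:Z
         & q2.[-1] = ((3 ^ logn 3 (3 * n)`!)%N)%:Z]).
Proof.
split.
  move=> n _; split.
    exists (q0 n), (gT n); split; last exact: sumT_q0.
    split.
    - by move=> t ht; apply: (@gT_dvd n t ht).
    - by move=> d hd; apply: (@univ n d hd).
    - by rewrite (monicP (gT_monic n)) ltr01.
  by move=> q /numT_val ->; apply: q0_m1.
move=> n _ r0 r1 r2 h0 h1 h2.
rewrite (numT_val h0) (numT_val h1) (numT_val h2) !q0_m1.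
have d1 : ~~ (3 %| (3 * n).+1)%N.
  by rewrite -(addn1 (3 * n)) dvdn_addr ?dvdn_mulr.
have d2 : ~~ (3 %| (3 * n).+2)%N.
  by rewrite -(addn2 (3 * n)) dvdn_addr ?dvdn_mulr.
by rewrite !addn1 addn2 !logn_step.
Qed.
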